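(* Let $\Delta_1\subseteq\Delta_2$ be reflexive $4$-polytopes in $N_\mathbb{R}$ and let $\Sigma_1$ be any projective $\Delta_1$-maximal fan. Then there exists a projective $\Delta_2$-maximal fan $\Sigma_2$ that refines $\Sigma_1$.
   Context: $N\cong\mathbb{Z}^4$ is a lattice with dual $M$. A lattice polytope $\Delta\subseteq N_\mathbb{R}$ with the origin in its interior is reflexive if $\Delta^*=\{m\in M_\mathbb{R}:\langle m,n\rangle\ge -1\ \forall n\in\Delta\}$ is a lattice polytope. For a reflexive polytope $\Delta$, a fan $\Sigma$ in $N_\mathbb{R}$ is $\Delta$-maximal if its set of rays equals the set of rays through the nonzero lattice points of $\Delta$ and $\Sigma$ is complete and simplicial; it is projective if its toric variety is projective (equivalently it admits a strictly convex piecewise-linear support function). $\Sigma_2$ refines $\Sigma_1$ means every cone of $\Sigma_2$ is contained in a cone of $\Sigma_1$. *)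

(* Defs.v *)
(* N = Z^4 is modelled by 'rV[int]_4, N_R (and M_R) by
   'rV[R]_4 for an arbitrary real field R. *)
From HB Require Import structures.
From mathcomp Require Import all_boot all_order all_algebra.
Unset Printing Implicit Defensive.
Import Order.TTheory GRing.Theory Num.Theory.
Local Open Scope ring_scope.

Section Toric.
Variable R : realFieldType.

Definition vec := 'rV[R]_4.
Definition lat := 'rV[int]_4.

Definition lat2vec (n : lat) : vec := map_mx (fun z : int => z%:~R) n.

Definition pairing (m u : vec) : R := \sum_(i < 4) m 0 i * u 0 i.

Definition seteq (A B : vec -> Prop) := forall x, A x <-> B x.
Definition vsubset (A B : vec -> Prop) := forall x, A x -> B x.

Definition conv (V : seq lat) (x : vec) : Prop :=
  exists c : 'I_(size V) -> R,
    (forall i, 0 <= c i) /\ \sum_i c i = 1 /\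
    x = \sum_i c i *: lat2vec (nth 0 V i).

Definition lattice_polytope (P : vec -> Prop) : Prop :=
  exists W : seq lat, seteq P (conv W).

Definition interior_pt (P : vec -> Prop) (x : vec) : Prop :=
  exists e : R, 0 < e /\ forall y : vec, (forall i, `|y 0 i - x 0 i| <= e) -> P y.

Definition dual (P : vec -> Prop) (m : vec) : Prop :=
  forall n, P n -> -1 <= pairing m n.

Definition reflexive_polytope (V : seq lat) : Prop :=
  interior_pt (conv V) 0 /\ lattice_polytope (dual (conv V)).

Definition cone (S : seq lat) (x : vec) : Prop :=
  exists c : 'I_(size S) -> R,
    (forall i, 0 <= c i) /\ x = \sum_i c i *: lat2vec (nth 0 S i).

Definition ray (v : vec) (x : vec) : Prop := exists t : R, 0 <= t /\ x = t *: v.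

Definition lin_indep (S : seq lat) : Prop :=
  forall c : 'I_(size S) -> R,
    \sum_i c i *: lat2vec (nth 0 S i) = 0 -> forall i, c i = 0.

Definition strongly_convex (C : vec -> Prop) : Prop :=
  forall x, C x -> C (- x) -> x = 0.

Definition is_face (tau sigma : vec -> Prop) : Prop :=
  exists m : vec, (forall u, sigma u -> 0 <= pairing m u) /\
    forall u, tau u <-> (sigma u /\ pairing m u = 0).

(* A fan is given by a finite list of cones, each given by generators. *)
Definition fanT := seq (seq lat).

Definition is_fan (F : fanT) : Prop :=
  [/\ forall S, S \in F -> strongly_convex (cone S),
      forall S tau, S \in F -> is_face tau (cone S) ->
        exists2 T, T \in F & seteq tau (cone T) &
      forall S T, S \in F -> T \in F ->
        is_face (fun x => cone S x /\ cone T x) (cone S) /\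
        is_face (fun x => cone S x /\ cone T x) (cone T)].

Definition complete (F : fanT) : Prop :=
  forall x : vec, exists2 S, S \in F & cone S x.

Definition simplicial (F : fanT) : Prop :=
  forall S, S \in F -> exists T, lin_indep T /\ seteq (cone S) (cone T).

Definition rays_are (F : fanT) (V : seq lat) : Prop :=
  (forall S (v : vec), S \in F -> v != 0 -> seteq (cone S) (ray v) ->
     exists n : lat, [/\ n != 0, conv V (lat2vec n) & seteq (cone S) (ray (lat2vec n))]) /\
  (forall n : lat, n != 0 -> conv V (lat2vec n) ->
     exists2 S, S \in F & seteq (cone S) (ray (lat2vec n))).

Definition delta_maximal (V : seq lat) (F : fanT) : Prop :=
  [/\ is_fan F, rays_are F V, complete F & simplicial F].

Definition maximal_cone (F : fanT) (S : seq lat) : Prop :=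
  S \in F /\ forall T, T \in F -> vsubset (cone S) (cone T) -> vsubset (cone T) (cone S).

(* F admits a strictly convex piecewise-linear support function
   (convention of Cox-Little-Schenck: phi = min of the m_sigma). *)
Definition projective (F : fanT) : Prop :=
  exists phi : vec -> R,
    (forall S, S \in F -> exists m : vec, forall u, cone S u -> phi u = pairing m u) /\
    (forall S, maximal_cone F S -> exists m : vec, forall u,
        phi u <= pairing m u /\ (phi u = pairing m u <-> cone S u)).

Definition refines (F2 F1 : fanT) : Prop :=
  forall S2, S2 \in F2 -> exists2 S1, S1 \in F1 & vsubset (cone S2) (cone S1).

End Toric.

(* Main.v *)
Require Import Defs.
From HB Require Import structures.
From mathcomp Require Import all_boot all_order all_algebra.
From Stdlib Require Import Classical ClassicalEpsilon.
From mathcomp Require Import zify.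
Set Implicit Arguments. Unset Strict Implicit. Unset Printing Implicit Defensive.
Import Order.TTheory GRing.Theory Num.Theory.
Local Open Scope ring_scope.

Section Proof.
Variable R : realFieldType.
Local Notation vec := (vec R).
Local Notation lv := (lat2vec R).
Local Notation pairing := (pairing R).
Local Notation cone := (cone R).
Local Notation ray := (ray R).
Local Notation lin_indep := (lin_indep R).
Local Notation strongly_convex := (strongly_convex R).
Local Notation is_face := (is_face R).
Local Notation seteq := (seteq R).
Local Notation vsubset := (vsubset R).
Local Notation conv := (conv R).

Definition pb (P : Prop) : bool := if excluded_middle_informative P then true else false.
Lemma pbP P : reflect P (pb P).
Proof. rewrite /pb; case: excluded_middle_informative => h; constructor => //. Qed.

Lemma pairingDl m1 m2 u : pairing (m1 + m2) u = pairing m1 u + pairing m2 u.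
Proof. rewrite /Defs.pairing -big_split; apply: eq_bigr => i _; by rewrite mxE mulrDl. Qed.
Lemma pairingZl t m u : pairing (t *: m) u = t * pairing m u.
Proof. rewrite /Defs.pairing mulr_sumr; apply: eq_bigr => i _; by rewrite mxE mulrA. Qed.
Lemma pairingNl m u : pairing (- m) u = - pairing m u.
Proof. rewrite /Defs.pairing -sumrN; apply: eq_bigr => i _; by rewrite mxE mulNr. Qed.
Lemma pairingBl m1 m2 u : pairing (m1 - m2) u = pairing m1 u - pairing m2 u.
Proof. by rewrite pairingDl pairingNl. Qed.
Lemma pairingDr m u1 u2 : pairing m (u1 + u2) = pairing m u1 + pairing m u2.
Proof. rewrite /Defs.pairing -big_split; apply: eq_bigr => i _; by rewrite mxE mulrDr. Qed.
Lemma pairingZr t m u : pairing m (t *: u) = t * pairing m u.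
Proof. rewrite /Defs.pairing mulr_sumr; apply: eq_bigr => i _; by rewrite mxE mulrCA. Qed.
Lemma pairing0r m : pairing m 0 = 0.
Proof. rewrite /Defs.pairing big1 // => i _; by rewrite mxE mulr0. Qed.
Lemma pairing0l u : pairing 0 u = 0.
Proof. rewrite /Defs.pairing big1 // => i _; by rewrite mxE mul0r. Qed.
Lemma pairing_sumr m (I : Type) (r : seq I) (P : pred I) (F : I -> vec) :
  pairing m (\sum_(i <- r | P i) F i) = \sum_(i <- r | P i) pairing m (F i).
Proof. exact: (big_morph (pairing m) (pairingDr m) (pairing0r m)). Qed.
Lemma pairing_suml u (I : Type) (r : seq I) (P : pred I) (F : I -> vec) :
  pairing (\sum_(i <- r | P i) F i) u = \sum_(i <- r | P i) pairing (F i) u.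
Proof. exact: (big_morph (pairing^~ u) (fun a b => pairingDl a b u) (pairing0l u)). Qed.

Definition lcomb (S : seq lat) (c : nat -> R) : vec :=
  \sum_(i < size S) c i *: lv (nth 0 S i).

Definition ext n (c : 'I_n -> R) : nat -> R :=
  fun i => match insub i with Some k => c k | None => 0 end.
Lemma extE n (c : 'I_n -> R) (k : 'I_n) : ext c k = c k.
Proof. by rewrite /ext valK. Qed.

Lemma coneE S x : cone S x <->
  exists c : nat -> R, (forall i, (i < size S)%N -> 0 <= c i) /\ x = lcomb S c.
Proof.
split.
  case=> c [c0 ->]; exists (ext c); split.
    by move=> i hi; rewrite /ext insubT.
  by apply: eq_bigr => i _; rewrite extE.
case=> c [c0 ->]; exists (fun k => c k); split => // i; exact: c0.
Qed.

Lemma lin_indepE S : lin_indep S <->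
  forall c : nat -> R, lcomb S c = 0 -> forall i, (i < size S)%N -> c i = 0.
Proof.
split.
  move=> h c hc i hi; exact: (h (fun k => c k) hc (Ordinal hi)).
move=> h c hc i; rewrite -extE; apply: h => //.
by rewrite -[RHS]hc; apply: eq_bigr => k _; rewrite extE.
Qed.

Lemma lcomb_cons a S c : lcomb (a :: S) c = c 0%N *: lv a + lcomb S (fun i => c i.+1).
Proof. by rewrite /lcomb /= big_ord_recl. Qed.
Lemma lcomb_nil c : lcomb [::] c = 0.
Proof. by rewrite /lcomb big_ord0. Qed.

Lemma lcombD S c1 c2 : lcomb S c1 + lcomb S c2 = lcomb S (fun i => c1 i + c2 i).
Proof. rewrite /lcomb -big_split; apply: eq_bigr => i _; by rewrite scalerDl. Qed.
Lemma lcombZ t S c : t *: lcomb S c = lcomb S (fun i => t * c i).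
Proof. rewrite /lcomb scaler_sumr; apply: eq_bigr => i _; by rewrite scalerA. Qed.
Lemma eq_lcomb S c1 c2 : (forall i, (i < size S)%N -> c1 i = c2 i) -> lcomb S c1 = lcomb S c2.
Proof. move=> h; apply: eq_bigr => i _; by rewrite h. Qed.
Lemma pairing_lcomb m S c :
  pairing m (lcomb S c) = \sum_(i < size S) c i * pairing m (lv (nth 0 S i)).
Proof. rewrite pairing_sumr; apply: eq_bigr => i _; by rewrite pairingZr. Qed.

Lemma cone_cons a S x : cone (a :: S) x <->
  exists t y, [/\ 0 <= t, cone S y & x = t *: lv a + y].
Proof.
rewrite coneE; split.
  case=> c [c0 ->]; exists (c 0%N), (lcomb S (fun i => c i.+1)); split.
  - exact: c0.
  - by apply/coneE; exists (fun i => c i.+1); split => // i hi; apply: c0.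
  - by rewrite lcomb_cons.
case=> t [y [t0 /coneE [c [c0 ->]] ->]].
exists (fun i => if i is k.+1 then c k else t); split.
  by case=> // i hi; apply: c0.
by rewrite lcomb_cons.
Qed.

Lemma cone_nil x : cone [::] x <-> x = 0.
Proof.
rewrite coneE; split; first by case=> c [_ ->]; rewrite lcomb_nil.
by move=> ->; exists (fun _ => 0); split => //; rewrite lcomb_nil.
Qed.

Lemma cone0 S : cone S 0.
Proof.
apply/coneE; exists (fun _ => 0); split => //.
by rewrite /lcomb big1 // => i _; rewrite scale0r.
Qed.

Lemma cone_add S x y : cone S x -> cone S y -> cone S (x + y).
Proof.
move=> /coneE [c [c0 ->]] /coneE [d [d0 ->]]; apply/coneE.
exists (fun i => c i + d i); split; last by rewrite lcombD.
by move=> i hi; rewrite addr_ge0 ?c0 ?d0.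
Qed.

Lemma cone_scale S t x : 0 <= t -> cone S x -> cone S (t *: x).
Proof.
move=> t0 /coneE [c [c0 ->]]; apply/coneE.
exists (fun i => t * c i); split; last by rewrite lcombZ.
by move=> i hi; rewrite mulr_ge0 ?c0.
Qed.

Lemma cone_mem S g : g \in S -> cone S (lv g).
Proof.
elim: S => //= a S IH; rewrite in_cons => /orP [/eqP -> | hg]; apply/cone_cons.
  by exists 1, 0; split => //; [exact: cone0 | rewrite scale1r addr0].
by exists 0, (lv g); split => //; [exact: IH | rewrite scale0r add0r].
Qed.

Lemma cone_sub S T x : (forall g, g \in S -> cone T (lv g)) -> cone S x -> cone T x.
Proof.
elim: S x => [|a S IH] x h.
  by move/cone_nil ->; exact: cone0.
case/cone_cons => t [y [t0 hy ->]]; apply: cone_add.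
  by apply: cone_scale => //; apply: h; rewrite mem_head.
by apply: IH => // g hg; apply: h; rewrite in_cons hg orbT.
Qed.

Lemma cone_nonneg m S x : (forall g, g \in S -> 0 <= pairing m (lv g)) ->
  cone S x -> 0 <= pairing m x.
Proof.
elim: S x => [|a S IH] x h.
  by move/cone_nil ->; rewrite pairing0r.
case/cone_cons => t [y [t0 hy ->]]; rewrite pairingDr pairingZr.
apply: addr_ge0; first by rewrite mulr_ge0 // h // mem_head.
by apply: IH => // g hg; apply: h; rewrite in_cons hg orbT.
Qed.

Lemma cone_zero m S x : (forall g, g \in S -> pairing m (lv g) = 0) ->
  cone S x -> pairing m x = 0.
Proof.
elim: S x => [|a S IH] x h.
  by move/cone_nil ->; rewrite pairing0r.
case/cone_cons => t [y [t0 hy ->]]; rewrite pairingDr pairingZr h ?mem_head // mulr0 add0r.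
by apply: IH => // g hg; apply: h; rewrite in_cons hg orbT.
Qed.

Lemma cone_face m S x : (forall g, g \in S -> 0 <= pairing m (lv g)) ->
  cone S x -> pairing m x = 0 ->
  cone [seq g <- S | pairing m (lv g) == 0] x.
Proof.
elim: S x => [|a S IH] x h.
  by move/cone_nil ->; rewrite /=; move=> _; apply: cone0.
case/cone_cons => t [y [t0 hy ->]]; rewrite pairingDr pairingZr => hz.
have ha : 0 <= pairing m (lv a) by apply: h; rewrite mem_head.
have hS : forall g, g \in S -> 0 <= pairing m (lv g).
  by move=> g hg; apply: h; rewrite in_cons hg orbT.
have hy0 := cone_nonneg hS hy.
have [h1 h2] : t * pairing m (lv a) = 0 /\ pairing m y = 0.
  have h1 : 0 <= t * pairing m (lv a) by rewrite mulr_ge0.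
  split; apply/eqP; rewrite eq_le ?h1 ?hy0 andbT.
    by rewrite -hz lerDl.
  by rewrite -hz lerDr.
have hy' := IH y hS hy h2.
rewrite /=; case: ifP => ha0.
  apply/cone_cons; exists t, y; split => //.
have -> : t = 0.
  by move/eqP: h1; rewrite mulf_eq0 ha0 orbF => /eqP.
by rewrite scale0r add0r.
Qed.


Lemma lv_eq0 n : lv n = 0 -> n = 0.
Proof.
move=> h; apply/rowP => j; move/rowP: h => /(_ j); rewrite !mxE.
by move/eqP; rewrite intr_eq0 => /eqP.
Qed.

Lemma lin_indep_nz S g : lin_indep S -> g \in S -> lv g != 0.
Proof.
move/lin_indepE => h /(nthP 0) [i hi <-]; apply/eqP => h0.
have h1 : lcomb S (fun k => if k == i then 1 else 0) = 0.
  rewrite /lcomb (bigD1 (Ordinal hi)) //= eqxx h0 scaler0 add0r big1 // => k hk.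
  by rewrite ifN ?scale0r //; apply: contra hk => /eqP e; apply/eqP/val_inj.
by have := h _ h1 i hi; rewrite eqxx => /eqP; rewrite oner_eq0.
Qed.

Definition is_dual (S : seq lat) (f : nat -> vec) :=
  forall i k, (i < size S)%N -> (k < size S)%N ->
    pairing (f i) (lv (nth 0 S k)) = (i == k)%:R.

Lemma dual_exists S : lin_indep S -> exists f, is_dual S f.
Proof.
move=> hS; set n := size S.
pose A : 'M[R]_(n, 4) := \matrix_(i < n, j < 4) lv (nth 0 S i) 0 j.
have rowA k : row k A = lv (nth 0 S k) by apply/rowP => j; rewrite !mxE.
have : row_free A.
  rewrite -kermx_eq0; apply/eqP/row_matrixP => i; rewrite row0.
  set u := row i (kermx A).
  have hu : u *m A = 0 by rewrite /u -row_mul mulmx_ker row0.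
  move: hu; rewrite mulmx_sum_row => hu.
  have hl : lcomb S (ext (fun k : 'I_n => u 0 k)) = 0.
    by rewrite -[RHS]hu; apply: eq_bigr => k _; rewrite extE rowA.
  apply/rowP => k; rewrite [RHS]mxE.
  have := (proj1 (lin_indepE S) hS) _ hl k (ltn_ord k).
  by rewrite (extE (fun k : 'I_n => u 0 k)).
case/row_freeP => B hB.
exists (fun i => if insub i is Some k then \row_j B j k else 0).
move=> i k hi hk; rewrite insubT /Defs.pairing.
have := congr1 (fun M : 'M[R]_n => M (Ordinal hk) (Ordinal hi)) hB; rewrite /= !mxE.
have -> : (i == k) = (Ordinal hk == Ordinal hi :> 'I_n) by rewrite eq_sym.
move=> <-.
apply: eq_bigr => j _; rewrite !mxE mulrC //.
Qed.

Lemma dual_coord S f c i : is_dual S f -> (i < size S)%N ->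
  pairing (f i) (lcomb S c) = c i.
Proof.
move=> hf hi; rewrite pairing_lcomb (bigD1 (Ordinal hi)) //= hf // eqxx mulr1.
rewrite big1 ?addr0 // => k hk; rewrite hf //.
have /negbTE -> : i != k by apply: contra hk => /eqP e; apply/eqP/val_inj.
by rewrite mulr0.
Qed.


Lemma lcomb0 S : lcomb S (fun _ => 0) = 0.
Proof. by rewrite /lcomb big1 // => i _; rewrite scale0r. Qed.

Lemma sub_lcomb S T : subseq S T -> forall c, exists c',
  lcomb S c = lcomb T c' /\
  forall i, (i < size S)%N -> exists i', (i' < size T)%N /\ c' i' = c i.
Proof.
elim: T S => [|y T IH] S.
  by rewrite subseq0 => /eqP -> c; exists c; split => //; rewrite !lcomb_nil.
case: S => [|x S] hsub c.
  by exists (fun _ => 0); split => //; rewrite lcomb_nil lcomb0.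
move: hsub => /=; case: eqP => [<- hsub | _ hsub].
  have [c'' [e hi]] := IH S hsub (fun i => c i.+1).
  exists (fun i => if i is k.+1 then c'' k else c 0%N); split.
    by rewrite !lcomb_cons e.
  case=> [|i] /=; first by exists 0%N.
  by move=> /hi [i' [h1 h2]]; exists i'.+1.
have [c'' [e hi]] := IH (x :: S) hsub c.
exists (fun i => if i is k.+1 then c'' k else 0); split.
  by rewrite [RHS]lcomb_cons -e scale0r add0r.
by move=> i /hi [i' [h1 h2]]; exists i'.+1.
Qed.

Lemma lin_indep_subseq S T : subseq S T -> lin_indep T -> lin_indep S.
Proof.
move=> hsub /lin_indepE hT; apply/lin_indepE => c hc i hi.
have [c' [e hidx]] := sub_lcomb hsub c.
have [i' [h1 <-]] := hidx i hi.
by apply: hT => //; rewrite -e.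
Qed.

Lemma cone_subseq S T x : subseq S T -> cone S x -> cone T x.
Proof.
move=> hsub; apply: cone_sub => g hg; apply: cone_mem.
exact: (mem_subseq hsub).
Qed.

Lemma lin_indep_sc S : lin_indep S -> strongly_convex (cone S).
Proof.
move/lin_indepE => hS x /coneE [a [a0 ha]] /coneE [b [b0 hb]].
have e : lcomb S (fun i => a i + b i) = 0 by rewrite -lcombD -ha -hb subrr.
rewrite ha; rewrite -(lcomb0 S); apply: eq_lcomb => i hi.
have := hS _ e i hi => /eqP; rewrite paddr_eq0 ?a0 ?b0 //.
by case/andP => /eqP.
Qed.

Lemma alpha_exists S (p : pred lat) : lin_indep S -> exists al : vec,
  (forall g, g \in S -> pairing al (lv g) = (~~ p g)%:R) /\
  (forall u, cone S u -> 0 <= pairing al u) /\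
  (forall u, cone S u -> (pairing al u = 0 <-> cone [seq g <- S | p g] u)).
Proof.
move=> hS; have [f hf] := dual_exists hS.
exists (\sum_(i < size S | ~~ p (nth 0 S i)) f i).
have hv : forall g, g \in S ->
    pairing (\sum_(i < size S | ~~ p (nth 0 S i)) f i) (lv g) = (~~ p g)%:R.
  move=> g /(nthP 0) [k hk <-]; rewrite pairing_suml.
  rewrite (eq_bigr (fun i : 'I_(size S) => (val i == k)%:R)); last first.
    by move=> i _; rewrite hf.
  rewrite big_mkcond (bigD1 (Ordinal hk)) //= eqxx big1 ?addr0.
    by case: (p _).
  move=> i hi; case: ifP => // _.
  by have /negbTE -> : val i != k by apply: contra hi => /eqP e; apply/eqP/val_inj.
have hnn : forall u, cone S u -> 0 <= pairing (\sum_(i < size S | ~~ p (nth 0 S i)) f i) u.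
  by move=> u; apply: cone_nonneg => g hg; rewrite hv //; case: (p g).
split => //; split => // u hu; split.
  move=> h0; have hf0 : forall g, g \in S ->
      0 <= pairing (\sum_(i < size S | ~~ p (nth 0 S i)) f i) (lv g).
    by move=> g hg; rewrite hv //; case: (p g).
  apply: (cone_sub _ (cone_face hf0 hu h0)).
  move=> g; rewrite mem_filter => /andP [hz hg]; apply: cone_mem.
  rewrite mem_filter hg andbT; move: hz; rewrite hv //.
  by case: (p g) => //=; rewrite oner_eq0.
move=> hu'; apply: (cone_zero _ hu') => g; rewrite mem_filter => /andP [hp hg].
by rewrite hv // hp.
Qed.


Definition dat := (seq lat * vec)%type.
Definition good (D : seq dat) :=
  [/\ forall s, s \in D -> lin_indep s.1,
      forall s t g, s \in D -> t \in D -> g \in s.1 ->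
        pairing s.2 (lv g) <= pairing t.2 (lv g),
      forall s t g, s \in D -> t \in D -> g \in s.1 ->
        pairing t.2 (lv g) = pairing s.2 (lv g) -> cone t.1 (lv g)
    & forall x, exists2 s, s \in D & cone s.1 x].

Lemma key D s t u : good D -> s \in D -> t \in D -> cone s.1 u ->
  pairing s.2 u <= pairing t.2 u /\ (pairing t.2 u = pairing s.2 u -> cone t.1 u).
Proof.
case=> _ G2 G3 _ hs ht hu.
have hnn : forall g, g \in s.1 -> 0 <= pairing (t.2 - s.2) (lv g).
  by move=> g hg; rewrite pairingBl subr_ge0 G2.
split; first by rewrite -subr_ge0 -pairingBl; apply: cone_nonneg hnn hu.
move=> e; have h0 : pairing (t.2 - s.2) u = 0 by rewrite pairingBl e subrr.
apply: (cone_sub _ (cone_face hnn hu h0)) => g; rewrite mem_filter.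
case/andP => /eqP; rewrite pairingBl => /eqP; rewrite subr_eq0 => /eqP e' hg.
exact: G3 e'.
Qed.

Lemma key_eq D s t u : good D -> s \in D -> t \in D -> cone s.1 u -> cone t.1 u ->
  pairing s.2 u = pairing t.2 u.
Proof.
move=> hD hs ht hu hu'; apply/eqP; rewrite eq_le.
by rewrite (key hD hs ht hu).1 (key hD ht hs hu').1.
Qed.

Lemma eps_exists (l0 : seq (R * R)) : (forall p, p \in l0 -> 0 < p.1) ->
  exists e, 0 < e /\ forall p, p \in l0 -> 0 < p.1 + e * p.2.
Proof.
have gen : forall a b e : R, 0 < a -> 0 < e -> e <= a / (`|b| + 1) -> 0 < a + e * b.
  move=> a b e ha he hle.
  have hb1 : 0 < `|b| + 1 by rewrite ltr_wpDl.
  have h1 : e * `|b| < a.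
    apply: (le_lt_trans (y := a / (`|b| + 1) * `|b|)).
      by rewrite ler_wpM2r.
    rewrite mulrAC ltr_pdivrMr // ltr_pM2l // ltrDl //.
  have h2 : - (e * `|b|) <= e * b.
    rewrite -mulrN; apply: ler_wpM2l; first exact: ltW.
    by rewrite lerNl -normrN ler_norm.
  by apply: (lt_le_trans _ (lerD (lexx a) h2)); rewrite subr_gt0.
suff : forall l : seq (R * R), (forall p, p \in l -> 0 < p.1) ->
  exists e, 0 < e /\ forall p, p \in l -> e <= p.1 / (`|p.2| + 1).
  move=> /(_ l0) h hl; have [e [he hle]] := h hl.
  by exists e; split => // p hp; apply: gen; rewrite ?hl ?hle.
elim=> [|p l IH] hl; first by exists 1.
have [e [he hle]] := IH (fun q hq => hl q (@mem_behead _ (p :: l) q hq)).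
have hp : 0 < p.1 / (`|p.2| + 1).
  by rewrite divr_gt0 ?hl ?mem_head // ltr_wpDl.
exists (Num.min e (p.1 / (`|p.2| + 1))); split; first by rewrite lt_min he hp.
move=> q; rewrite in_cons => /orP [/eqP -> | hq]; first by rewrite ge_min lexx orbT.
by rewrite ge_min hle.
Qed.


Fixpoint allmasks (n : nat) : seq bitseq :=
  if n is k.+1 then [seq true :: b | b <- allmasks k] ++ [seq false :: b | b <- allmasks k]
  else [:: [::]].

Lemma allmasksP m : m \in allmasks (size m).
Proof.
elim: m => [|b m IH] //=; rewrite mem_cat; case: b.
  by rewrite map_f.
by rewrite map_f ?orbT.
Qed.

Definition masks (D : seq dat) : fanT :=
  flatten [seq [seq mask b s.1 | b <- allmasks (size s.1)] | s <- D].

Lemma masksP D S : S \in masks D <-> exists2 s, s \in D & subseq S s.1.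
Proof.
split.
  case/flattenP => l /mapP [s hs ->] /mapP [b _ ->].
  by exists s => //; exact: mask_subseq.
case=> s hs /subseqP [m hm ->]; apply/flattenP.
exists [seq mask b s.1 | b <- allmasks (size s.1)]; first exact: map_f.
by apply: map_f; rewrite -hm allmasksP.
Qed.

Lemma is_face_ext (t1 t2 C : vec -> Prop) :
  (forall x, t1 x <-> t2 x) -> is_face t1 C -> is_face t2 C.
Proof.
move=> e [m [h1 h2]]; exists m; split => // u; rewrite -e; exact: h2.
Qed.

Lemma cone_filter_mem T t x : subseq T t ->
  (cone T x <-> cone [seq g <- t | g \in T] x).
Proof.
move=> hs; split; apply: cone_sub => g hg; apply: cone_mem.
  by rewrite mem_filter hg (mem_subseq hs).
by move: hg; rewrite mem_filter => /andP [].
Qed.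

Lemma face_inter D S T : good D -> S \in masks D -> T \in masks D ->
  is_face (fun x => cone S x /\ cone T x) (cone S).
Proof.
move=> hD /masksP [s hs hSs] /masksP [t ht hTt].
have hD' := hD; case: hD' => G1 G2 G3 G4.
have [al [alv [alnn aliff]]] := alpha_exists [pred g | g \in T] (G1 _ ht).
pose f := t.2 - s.2.
pose l0 := [seq ((if 0 < pairing f (lv g) then pairing f (lv g) else 1), pairing al (lv g)) | g <- S].
have hl0 : forall p, p \in l0 -> 0 < p.1.
  by move=> p /mapP [g _ ->] /=; case: ifP.
have [e [he hl]] := eps_exists hl0.
have gS : forall g, g \in S -> g \in s.1 by move=> g; apply: mem_subseq.
have pf0 : forall g, g \in S -> 0 <= pairing f (lv g).
  by move=> g hg; rewrite pairingBl subr_ge0 G2 // gS.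
have hpos : forall g, g \in S -> 0 < pairing f (lv g) ->
    0 < pairing (f + e *: al) (lv g).
  move=> g hg hp; have := hl _ (map_f _ hg); rewrite /= hp.
  by rewrite pairingDl pairingZl.
have hzero : forall g, g \in S -> pairing f (lv g) = 0 ->
    cone t.1 (lv g) /\ pairing (f + e *: al) (lv g) = e * pairing al (lv g).
  move=> g hg hp; split.
    by apply: (G3 s) => //; [exact: gS | move/eqP: hp; rewrite pairingBl subr_eq0 => /eqP].
  by rewrite pairingDl pairingZl hp add0r.
have hnn : forall g, g \in S -> 0 <= pairing (f + e *: al) (lv g).
  move=> g hg; have := pf0 g hg; rewrite le_eqVlt => /orP [/eqP h0 | hp].
    have [hc ->] := hzero g hg (esym h0).
    by apply: mulr_ge0; [exact: ltW | exact: alnn].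
  exact: ltW (hpos g hg hp).
exists (f + e *: al); split; first by move=> u; apply: cone_nonneg.
move=> u; split.
  case=> hu hu'; split => //.
  have hus : cone s.1 u := cone_subseq hSs hu.
  have hut : cone t.1 u := cone_subseq hTt hu'.
  rewrite pairingDl pairingZl pairingBl (key_eq hD hs ht hus hut) subrr add0r.
  have -> : pairing al u = 0 by apply/(aliff _ hut)/(cone_filter_mem _ hTt).
  by rewrite mulr0.
case=> hu h0; split => //.
apply: (cone_sub _ (cone_face hnn hu h0)) => g; rewrite mem_filter.
case/andP => /eqP hb hg.
have h0f : pairing f (lv g) = 0.
  apply/eqP; rewrite eq_le pf0 // andbT leNgt; apply/negP => hp.
  by have := hpos g hg hp; rewrite hb ltxx.
have [hc hv] := hzero g hg h0f.
move: hb; rewrite hv => /eqP; rewrite mulf_eq0 gt_eqF //= => /eqP hal.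
have := (aliff _ hc).1 hal => /(cone_filter_mem _ hTt).
done.
Qed.


Lemma lv0 : lv 0 = 0.
Proof. by apply/rowP => j; rewrite !mxE. Qed.

Lemma cone_single g x : cone [:: g] x <-> ray (lv g) x.
Proof.
rewrite cone_cons; split.
  by case=> t [y [t0 /cone_nil -> ->]]; exists t; rewrite addr0.
by case=> t [t0 ->]; exists t, 0; split => //; [exact/cone_nil | rewrite addr0].
Qed.

Lemma ray_scale t v : 0 < t -> seteq (ray (t *: v)) (ray v).
Proof.
move=> ht x; split.
  by case=> s [s0 ->]; exists (s * t); rewrite scalerA mulr_ge0 // ltW.
case=> s [s0 ->]; exists (s / t); split; first by rewrite divr_ge0 // ltW.
by rewrite scalerA mulfVK // gt_eqF.
Qed.

Lemma final D V2 (F1 : fanT) : good D ->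
  (forall s g, s \in D -> g \in s.1 -> conv V2 (lv g)) ->
  (forall s, s \in D -> exists2 S1, S1 \in F1 & vsubset (cone s.1) (cone S1)) ->
  (forall n : lat, n != 0 -> conv V2 (lv n) ->
     exists2 s, s \in D & exists2 g, g \in s.1 & seteq (ray (lv g)) (ray (lv n))) ->
  exists F2 : fanT, [/\ delta_maximal R V2 F2, projective R F2 & refines R F2 F1].
Proof.
move=> hD hconv href hrays.
have hD' := hD; case: hD' => G1 G2 G3 G4.
have lin : forall S, S \in masks D -> lin_indep S.
  by move=> S /masksP [s hs hS]; apply: lin_indep_subseq hS (G1 _ hs).
exists (masks D); split.
- split.
  + split.
    * by move=> S hS; apply: lin_indep_sc; apply: lin.
    * move=> S tau hS [m [hm htau]].
      exists [seq g <- S | pairing m (lv g) == 0].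
        case/masksP: hS => s hs hSs; apply/masksP; exists s => //.
        exact: subseq_trans (filter_subseq _ _) hSs.
      move=> u; rewrite htau; split.
        case=> hu h0; apply: cone_face => // g hg; apply: hm; exact: cone_mem.
      move=> hu; split; first exact: cone_subseq (filter_subseq _ _) hu.
      by apply: (cone_zero _ hu) => g; rewrite mem_filter => /andP [/eqP].
    * move=> S T hS hT; split; first exact: face_inter hD hS hT.
      apply: (is_face_ext (t1 := fun x => cone T x /\ cone S x)).
        by move=> x; split; case.
      exact: face_inter hD hT hS.
  + split.
    * move=> S v hS hv hSv.
      case/masksP: (hS) => s hs hSs.
      case: S hS hSs hSv => [|g S'] hS hSs hSv.
        have := (hSv v).2; case/(_ _)/Wrap; first by exists 1; rewrite scale1r.
        by move/cone_nil => e; rewrite e eqxx in hv.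
      have hg : g \in s.1 by apply: (mem_subseq hSs); rewrite mem_head.
      have hgnz : lv g != 0 by apply: lin_indep_nz hg; apply: G1.
      have [t [t0 et]] := (hSv (lv g)).1 (cone_mem (mem_head _ _)).
      have tpos : 0 < t.
        rewrite lt_def t0 andbT; apply: contra hgnz => /eqP t00.
        by rewrite et t00 scale0r.
      exists g; split.
      - by apply: contra hgnz => /eqP ->; rewrite lv0.
      - exact: hconv hg.
      - move=> x; rewrite hSv et; split => h.
          by apply/(ray_scale _ tpos).
        by apply/(ray_scale _ tpos).
    * move=> n hn hc; have [s hs [g hg hr]] := hrays n hn hc.
      exists [:: g].
        apply/masksP; exists s => //; rewrite sub1seq //.
      by move=> x; rewrite cone_single hr.
  + by move=> x; have [s hs hx] := G4 x; exists s.1 => //; apply/masksP; exists s.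
  + by move=> S hS; exists S; split => //; apply: lin.
- pose sel u := epsilon (inhabits ([::], 0) : inhabited dat) (fun s => s \in D /\ cone s.1 u).
  have hsel : forall u, sel u \in D /\ cone (sel u).1 u.
    move=> u; have [s hs hu] := G4 u; exact: (epsilon_spec _ (fun s => s \in D /\ cone s.1 u) (ex_intro _ s (conj hs hu))).
  exists (fun u => pairing (sel u).2 u); split.
    move=> S /masksP [s hs hSs]; exists s.2 => u hu.
    have [h1 h2] := hsel u.
    exact: key_eq hD h1 hs h2 (cone_subseq hSs hu).
  move=> S [hS hmax]; have [s hs hSs] := (masksP D S).1 hS.
  have hsS : vsubset (cone s.1) (cone S).
    apply: hmax; first by apply/masksP; exists s.
    by move=> x; apply: cone_subseq hSs.
  exists s.2 => u; have [h1 h2] := hsel u; split.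
    exact: (key hD h1 hs h2).1.
  split.
    by move=> e; apply: hsS; apply: (key hD h1 hs h2).2.
  by move=> hu; apply: key_eq hD h1 hs h2 (cone_subseq hSs hu).
- move=> S /masksP [s hs hSs]; have [S1 h1 h2] := href s hs.
  by exists S1 => // x hx; apply: h2; apply: cone_subseq hSs hx.
Qed.


Definition dualf (S : seq lat) : nat -> vec :=
  epsilon (inhabits (fun _ => 0)) (is_dual S).

Lemma dualfP S : lin_indep S -> is_dual S (dualf S).
Proof. by move=> h; apply: epsilon_spec; apply: dual_exists. Qed.

Lemma coords S x : lin_indep S -> cone S x ->
  (forall i, (i < size S)%N -> 0 <= pairing (dualf S i) x) /\
  x = lcomb S (fun i => pairing (dualf S i) x).
Proof.
move=> hS /coneE [a [a0 ->]]; have hd := dualfP hS.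
split; first by move=> i hi; rewrite dual_coord // a0.
by apply: eq_lcomb => i hi; rewrite dual_coord.
Qed.

Lemma lcomb_nat S c : lcomb S c = \sum_(0 <= i < size S) c i *: lv (nth 0 S i).
Proof. by rewrite big_mkord. Qed.

Lemma size_set_nthE (S : seq lat) j (v : lat) : (j < size S)%N -> size (set_nth 0 S j v) = size S.
Proof. by move=> hj; rewrite size_set_nth; apply/maxn_idPr. Qed.

Lemma lcomb_set_nth (S : seq lat) j (v : lat) d : (j < size S)%N ->
  lcomb (set_nth 0 S j v) d =
  lcomb S (fun l => if l == j then 0 else d l) + d j *: lv v.
Proof.
move=> hj; rewrite !lcomb_nat size_set_nthE // !big_mkord.
rewrite (bigD1 (Ordinal hj)) //= [X in _ = X + _](bigD1 (Ordinal hj)) //=.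
rewrite nth_set_nth /= !eqxx scale0r add0r addrC; congr (_ + _).
apply: eq_bigr => i hi; rewrite nth_set_nth /=.
have /negbTE -> : val i != j by apply: contra hi => /eqP e; apply/eqP/val_inj.
by [].
Qed.

Lemma exists_min (s : seq nat) (F : nat -> R) : s != [::] ->
  exists2 j, j \in s & forall l, l \in s -> F j <= F l.
Proof.
elim: s => [|a s IH] // _.
case: (eqVneq s [::]) => [-> | hs].
  by exists a; rewrite ?mem_head // => l; rewrite inE => /eqP ->.
have [j hj hmin] := IH hs.
case: (lerP (F a) (F j)) => h.
  exists a; first exact: mem_head.
  move=> l; rewrite in_cons => /orP [/eqP -> // | hl].
  exact: le_trans h (hmin l hl).
exists j; first by rewrite in_cons hj orbT.
move=> l; rewrite in_cons => /orP [/eqP -> | hl]; [exact: ltW | exact: hmin].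
Qed.


Definition cv (v : lat) (s : dat) j := pairing (dualf s.1 j) (lv v).
Definition newc (v : lat) e (s : dat) j : dat :=
  (set_nth 0 s.1 j v, s.2 + (e / cv v s j) *: dualf s.1 j).
Definition stel v e (D : seq dat) : seq dat :=
  flatten [seq if pb (cone s.1 (lv v))
               then [seq newc v e s j | j <- iota 0 (size s.1) & 0 < cv v s j]
               else [:: s] | s <- D].

Lemma stelP v e D x : x \in stel v e D <-> exists2 s, s \in D &
  ((~ cone s.1 (lv v) /\ x = s) \/
   (cone s.1 (lv v) /\ exists j, [/\ (j < size s.1)%N, 0 < cv v s j & x = newc v e s j])).
Proof.
split.
  case/flattenP => l /mapP [s hs ->] hx; exists s => //.
  case: (boolP (pb (cone s.1 (lv v)))) hx => hb hx.
    have h := elimT (pbP _) hb.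
    case/mapP: hx => j; rewrite mem_filter mem_iota add0n => /andP [hc hj] ->.
    by right; split => //; exists j.
  rewrite inE in hx; left; split; last exact/eqP.
  by move/(introT (pbP _)); rewrite (negbTE hb).
set F := fun s0 : dat => if pb (cone s0.1 (lv v))
               then [seq newc v e s0 j | j <- iota 0 (size s0.1) & 0 < cv v s0 j]
               else [:: s0].
case=> s hs [[h ->] | [h [j [hj hc ->]]]]; apply/flattenP.
  exists [:: s]; last by rewrite mem_head.
  have -> : [:: s] = F s by rewrite /F (introF (pbP _) h).
  exact: map_f.
exists [seq newc v e s j | j <- iota 0 (size s.1) & 0 < cv v s j].
  have -> : [seq newc v e s j | j <- iota 0 (size s.1) & 0 < cv v s j] = F s.
    by rewrite /F (introT (pbP _) h).
  exact: map_f.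
by apply: map_f; rewrite mem_filter mem_iota add0n hc hj.
Qed.

Section Newc.
Variables (v : lat) (e : R) (s : dat) (j : nat).
Hypotheses (hS : lin_indep s.1) (hj : (j < size s.1)%N) (hc : 0 < cv v s j).
Let nc := newc v e s j.

Lemma newc_nth l : nth 0 nc.1 l = if l == j then v else nth 0 s.1 l.
Proof. by rewrite /nc /newc /= nth_set_nth. Qed.

Lemma newc_size : size nc.1 = size s.1.
Proof. exact: size_set_nthE. Qed.

Lemma newc_pair x : pairing nc.2 x = pairing s.2 x + e / cv v s j * pairing (dualf s.1 j) x.
Proof. by rewrite /nc /newc /= pairingDl pairingZl. Qed.

Lemma newc_v : pairing nc.2 (lv v) = pairing s.2 (lv v) + e.
Proof. by rewrite newc_pair -/(cv v s j) mulfVK // gt_eqF. Qed.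

Lemma newc_other l : (l < size s.1)%N -> l != j ->
  pairing nc.2 (lv (nth 0 s.1 l)) = pairing s.2 (lv (nth 0 s.1 l)).
Proof.
move=> hl hlj; rewrite newc_pair (dualfP hS) // eq_sym.
by rewrite (negbTE hlj) mulr0 addr0.
Qed.

Lemma newc_mem g : g \in nc.1 ->
  g = v \/ exists l, [/\ (l < size s.1)%N, l != j & g = nth 0 s.1 l].
Proof.
case/(nthP 0) => l; rewrite newc_size newc_nth => hl.
by case: eqP => [_ <- | /eqP hlj <-]; [left | right; exists l].
Qed.

Lemma newc_vmem : v \in nc.1.
Proof.
by apply/(nthP 0); exists j; rewrite ?newc_size // newc_nth eqxx.
Qed.

Lemma newc_li : lin_indep nc.1.
Proof.
apply/lin_indepE => d; rewrite /nc /newc /= lcomb_set_nth // => h0.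
have hd := dualfP hS.
have hdj : d j = 0.
  have := congr1 (pairing (dualf s.1 j)) h0.
  rewrite pairing0r pairingDr dual_coord // eqxx pairingZr -/(cv v s j) add0r.
  by move/eqP; rewrite mulf_eq0 (gt_eqF hc) orbF => /eqP.
have h1 : lcomb s.1 (fun l => if l == j then 0 else d l) = 0.
  by rewrite -[RHS]h0 hdj scale0r addr0.
move=> i; rewrite size_set_nthE // => hi.
have := (proj1 (lin_indepE _) hS) _ h1 i hi.
by case: eqP => [-> _ | _ ->].
Qed.

Lemma newc_sub x : cone s.1 (lv v) -> cone nc.1 x -> cone s.1 x.
Proof.
move=> hv; apply: cone_sub => g /newc_mem [-> // | [l [hl _ ->]]].
by apply: cone_mem; rewrite mem_nth.
Qed.

Lemma newc_face x : cone s.1 x -> pairing (dualf s.1 j) x = 0 -> cone nc.1 x.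
Proof.
move=> hx h0; have [c0 ex] := coords hS hx.
apply/coneE; exists (fun l => pairing (dualf s.1 l) x); split.
  by move=> i; rewrite newc_size; apply: c0.
rewrite /nc /newc /= lcomb_set_nth // h0 scale0r addr0 {1}ex.
by apply: eq_lcomb => i hi; case: eqP => // ->.
Qed.

End Newc.

Lemma stellar D v : good D -> lv v != 0 -> exists D',
  [/\ good D',
      forall x, x \in D' -> exists2 s, s \in D &
        vsubset (cone x.1) (cone s.1) /\ (forall g, g \in x.1 -> g \in s.1 \/ g = v),
      exists2 x, x \in D' & v \in x.1 &
      forall s g, s \in D -> g \in s.1 ->
        exists2 x, x \in D' & exists2 g', g' \in x.1 & seteq (ray (lv g')) (ray (lv g))].
Proof.
move=> hD hv; have hD' := hD; case: hD' => G1 G2 G3 G4.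
pose gapA (s t : dat) := pairing t.2 (lv v) - pairing s.2 (lv v).
pose pA (s t : dat) : R * R := (if 0 < gapA s t then gapA s t else 1, -1).
pose dB (s t : dat) (g : lat) := pairing t.2 (lv g) - pairing s.2 (lv g).
pose pB (s t : dat) (g : lat) (j : nat) : R * R := (if 0 < dB s t g then dB s t g else 1,
                            pairing (dualf t.1 j) (lv g) / cv v t j).
pose LA := [seq pA s t | s <- D, t <- D].
pose LB := flatten [seq [seq pB st.1 st.2 g j | g <- st.1.1, j <- iota 0 (size st.2.1)]
                   | st <- [seq (s, t) | s <- D, t <- D]].
have hpos : forall p, p \in LA ++ LB -> 0 < p.1.
  move=> p; rewrite mem_cat => /orP [/allpairsP [[s t] [_ _ ->]] |
     /flattenP [l /mapP [st _ ->] /allpairsP [[g j] [_ _ ->]]]] /=; by case: ifP.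
have [e [he hle]] := eps_exists hpos.
have hA : forall s t, s \in D -> t \in D -> 0 < gapA s t -> 0 < gapA s t + e * -1.
  move=> s t hs ht hg; have := hle (pA s t); rewrite /= hg; apply.
  by rewrite mem_cat; apply/orP; left; apply: allpairs_f.
have hB : forall s t g j, s \in D -> t \in D -> g \in s.1 -> (j < size t.1)%N ->
    0 < dB s t g -> 0 < dB s t g + e * (pairing (dualf t.1 j) (lv g) / cv v t j).
  move=> s t g j hs ht hg hj hd; have := hle (pB s t g j); rewrite /= hd; apply.
  rewrite mem_cat; apply/orP; right; apply/flattenP.
  exists [seq pB (s, t).1 (s, t).2 g0 j0 | g0 <- (s, t).1.1, j0 <- iota 0 (size (s, t).2.1)].
    apply: (map_f (fun st : dat * dat => _)).
    exact: (allpairs_f (fun s0 t0 : dat => (s0, t0))).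
  by apply: (allpairs_f (fun g0 j0 => pB s t g0 j0)) => //; rewrite mem_iota add0n.
have hexj : forall s, s \in D -> cone s.1 (lv v) ->
    exists2 j, (j < size s.1)%N & 0 < cv v s j.
  move=> s hs hcv; have [cnn ecv] := coords (G1 _ hs) hcv.
  case: (pbP (exists2 j, (j < size s.1)%N & 0 < cv v s j)) => // hno.
  exfalso; apply: (negP hv); apply/eqP.
  rewrite ecv -(lcomb0 s.1); apply: eq_lcomb => i hi.
  apply/eqP; rewrite eq_le (cnn i hi) andbT leNgt; apply/negP => hci.
  by apply: hno; exists i.
exists (stel v e D).
have vals : forall x g, x \in stel v e D -> g \in x.1 -> exists2 s, s \in D &
   ((g = v /\ cone s.1 (lv v) /\ pairing x.2 (lv g) = pairing s.2 (lv v) + e) \/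
    (g \in s.1 /\ pairing x.2 (lv g) = pairing s.2 (lv g))).
  move=> x g /stelP [s hs [[_ ->] | [hcv [j [hj hc ->]]]]] hg; exists s => //.
    by right.
  case: (newc_mem hj hg) => [-> | [l [hl0 hlj ->]]].
    by left; split => //; split => //; apply: newc_v.
  by right; split; [exact: mem_nth | exact: (newc_other v e (G1 _ hs) hj hl0 hlj)].
have G23 : forall x y g, x \in stel v e D -> y \in stel v e D -> g \in x.1 ->
    pairing x.2 (lv g) <= pairing y.2 (lv g) /\
    (pairing y.2 (lv g) = pairing x.2 (lv g) -> cone y.1 (lv g)).
  move=> x y g hx hy hg.
  have [s hs hval] := vals x g hx hg.
  case/stelP: hy => t ht [[hnt ->] | [hct [j [hj hc ->]]]].
    case: hval => [[-> [hcs ->]] | [hgs ->]]; last first.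
      by split; [apply: G2 | apply: G3].
    have [k1 k2] := key hD hs ht hcs.
    have hgap : 0 < gapA s t.
      rewrite /gapA subr_gt0 lt_def k1 andbT; apply/eqP => e'; exact: hnt (k2 e').
    have := hA s t hs ht hgap; rewrite /gapA mulrN1 => h.
    have hlt : pairing s.2 (lv v) + e < pairing t.2 (lv v).
      by rewrite -subr_gt0 opprD addrA.
    split; first exact: ltW.
    by move=> eq; rewrite eq ltxx in hlt.
  case: hval => [[-> [hcs ->]] | [hgs ->]].
    rewrite newc_v // (key_eq hD hs ht hcs hct); split => // _.
    by apply: cone_mem; apply: (newc_vmem v e hj).
  rewrite newc_pair.
  set p := pairing (dualf t.1 j) (lv g).
  have hd0 : 0 <= dB s t g by rewrite /dB subr_ge0 G2.
  case: (ltrP 0 (dB s t g)) => hdB.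
    have := hB s t g j hs ht hgs hj hdB; rewrite /dB -/p => h.
    have hlt : pairing s.2 (lv g) < pairing t.2 (lv g) + e / cv v t j * p.
      rewrite -subr_gt0; suff -> : pairing t.2 (lv g) + e / cv v t j * p - pairing s.2 (lv g)
          = pairing t.2 (lv g) - pairing s.2 (lv g) + e * (p / cv v t j) by [].
      by rewrite mulrAC -mulrA addrAC.
    split; first exact: ltW.
    by move=> eq; rewrite eq ltxx in hlt.
  have e0 : pairing t.2 (lv g) = pairing s.2 (lv g).
    by apply/eqP; rewrite -subr_eq0 -/(dB s t g) eq_le hdB hd0.
  have hct' := G3 _ _ _ hs ht hgs e0.
  have hp : 0 <= p by apply: ((coords (G1 _ ht) hct').1 j hj).
  have hp2 : 0 <= e / cv v t j * p by rewrite mulr_ge0 // divr_ge0 // ltW.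
  rewrite e0; split; first by rewrite lerDl.
  move/eqP; rewrite addrC -subr_eq0 addrK mulf_eq0 mulf_eq0 invr_eq0 (gt_eqF he) (gt_eqF hc) /= => /eqP p0.
  exact: (newc_face v e (G1 _ ht) hj hct' p0).
split.
- split.
  + move=> x /stelP [s hs [[_ ->] | [hcv [j [hj hc ->]]]]]; first exact: G1.
    exact: newc_li (G1 _ hs) hj hc.
  + by move=> x y g hx hy hg; apply: (G23 x y g hx hy hg).1.
  + by move=> x y g hx hy hg; apply: (G23 x y g hx hy hg).2.
  + move=> x; have [s hs hx] := G4 x.
    case: (excluded_middle_informative (cone s.1 (lv v))) => hcv; last first.
      by exists s => //; apply/stelP; exists s => //; left.
    have hS := G1 _ hs.
    have [cnn ecv] := coords hS hcv.
    have [ann ex] := coords hS hx.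
    pose I := [seq l <- iota 0 (size s.1) | 0 < cv v s l].
    have hI : I != [::].
      have [j0 hj0 hc0] := hexj s hs hcv.
      apply/eqP => hI0; have : j0 \in I by rewrite mem_filter mem_iota add0n hc0 hj0.
      by rewrite hI0.
    pose a i := pairing (dualf s.1 i) x.
    have [j hjI hmin] := exists_min (fun l => a l / cv v s l) hI.
    move: hjI; rewrite mem_filter mem_iota add0n => /andP [hc hj].
    exists (newc v e s j); first by apply/stelP; exists s => //; right; split => //; exists j.
    pose r := a j / cv v s j.
    have r0 : 0 <= r by rewrite divr_ge0 ?ann // ltW.
    apply/coneE; exists (fun l => if l == j then r else a l - r * cv v s l); split.
      move=> i; rewrite newc_size // => hi; case: eqP => // /eqP hij.
      case: (ltrP 0 (cv v s i)) => hci.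
        rewrite subr_ge0 -ler_pdivlMr //; apply: hmin.
        by rewrite mem_filter mem_iota add0n hci hi.
      have -> : cv v s i = 0 by apply/eqP; rewrite eq_le hci cnn.
      by rewrite mulr0 subr0 ann.
    rewrite /newc /= lcomb_set_nth // eqxx {1}ex.
    rewrite [in r *: _]ecv lcombZ lcombD; apply: eq_lcomb => i hi.
    case: eqP => [-> | _]; first by rewrite add0r /r mulfVK // gt_eqF.
    by rewrite subrK.
- move=> x /stelP [s hs [[_ ->] | [hcv [j [hj hc ->]]]]].
    exists s => //; split => //; by left.
  exists s => //; split; first by move=> y; apply: (newc_sub hj hcv).
  move=> g /(newc_mem hj) [-> | [l [hl _ ->]]]; first by right.
  by left; rewrite mem_nth.
- have [s hs hcv] := G4 (lv v); have [j hj hc] := hexj s hs hcv.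
  exists (newc v e s j); last exact: (newc_vmem v e hj).
  by apply/stelP; exists s => //; right; split => //; exists j.
- move=> s g hs hg.
  case: (excluded_middle_informative (cone s.1 (lv v))) => hcv; last first.
    exists s; first by apply/stelP; exists s => //; left.
    by exists g.
  have hS := G1 _ hs.
  have [cnn ecv] := coords hS hcv.
  case/(nthP 0): hg => l hl <-.
  case: (boolP (has (fun j => (j != l) && (0 < cv v s j)) (iota 0 (size s.1)))).
    case/hasP => j; rewrite mem_iota add0n => hj /andP [hjl hc].
    exists (newc v e s j); first by apply/stelP; exists s => //; right; split => //; exists j.
    exists (nth 0 s.1 l) => //.
    by apply/(nthP 0); exists l; [rewrite newc_size | rewrite newc_nth eq_sym (negbTE hjl)].
  move/hasPn => hno.
  have hz : forall j, (j < size s.1)%N -> j != l -> cv v s j = 0.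
    move=> j hj hjl; have := hno j; rewrite mem_iota add0n hj hjl /= => /(_ isT) hn.
    by apply/eqP; rewrite eq_le cnn // andbT leNgt.
  have ev : lv v = cv v s l *: lv (nth 0 s.1 l).
    rewrite {1}ecv /lcomb (bigD1 (Ordinal hl)) //= big1 ?addr0 // => i hi.
    by rewrite -/(cv v s i) hz ?scale0r //.
  have hcl : 0 < cv v s l.
    rewrite lt_def cnn // andbT; apply: contra hv => /eqP c0.
    by rewrite ev c0 scale0r.
  exists (newc v e s l); first by apply/stelP; exists s => //; right; split => //; exists l.
  exists v; first exact: (newc_vmem v e hl).
  by rewrite ev; apply: ray_scale.
Qed.

Lemma exists_list_nth (A B : Type) (a0 : A) (b0 : B) (l : seq A) (P : A -> B -> Prop) :
  (forall i, (i < size l)%N -> exists b, P (nth a0 l i) b) ->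
  exists l' : seq B, size l' = size l /\
    forall i, (i < size l)%N -> P (nth a0 l i) (nth b0 l' i).
Proof.
elim: l => [|a l IH] h; first by exists [::].
have [b hb] := h 0%N isT.
have [l' [hs hl']] := IH (fun i hi => h i.+1 hi).
by exists (b :: l'); split; [rewrite /= hs | case].
Qed.

Lemma exists_list (A B : eqType) (l : seq A) (P : A -> B -> Prop) :
  (forall a, a \in l -> exists b, P a b) ->
  exists l' : seq B, (forall b, b \in l' -> exists2 a, a \in l & P a b) /\
    (forall a, a \in l -> exists2 b, b \in l' & P a b).
Proof.
elim: l => [|a l IH] h; first by exists [::].
have [b hb] := h a (mem_head _ _).
have [l' [h1 h2]] := IH (fun x hx => h x (@mem_behead _ (a :: l) x hx)).
exists (b :: l'); split.
  move=> y; rewrite in_cons => /orP [/eqP -> | hy]; first by exists a; rewrite ?mem_head.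
  by have [x hx hP] := h1 y hy; exists x; rewrite // in_cons hx orbT.
move=> x; rewrite in_cons => /orP [/eqP -> | hx]; first by exists b; rewrite ?mem_head.
by have [y hy hP] := h2 x hx; exists y; rewrite // in_cons hy orbT.
Qed.

Lemma count_lt (T : eqType) (a b : pred T) (s : seq T) :
  (forall x, a x -> b x) -> (exists x, [/\ x \in s, b x & ~~ a x]) ->
  (count a s < count b s)%N.
Proof.
elim: s => [|y s IH] hab [x [hx hb hna]] //.
rewrite /=; move: hx; rewrite in_cons => /orP [/eqP ex | hx].
  rewrite -ex hb (negbTE hna) add0n add1n ltnS; exact: sub_count.
rewrite -addnS; apply: leq_add.
  by case: (boolP (a y)) => // /hab ->.
by apply: IH => //; exists x.
Qed.

Lemma maximal_above (F : fanT) S : S \in F ->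
  exists S', maximal_cone R F S' /\ vsubset (cone S) (cone S').
Proof.
move=> hS.
pose cnt (T : seq lat) := count (fun U => pb (vsubset (cone U) (cone T))) F.
suff : forall k T, T \in F -> vsubset (cone S) (cone T) -> (size F - cnt T <= k)%N ->
  exists S', maximal_cone R F S' /\ vsubset (cone S) (cone S').
  by move/(_ (size F) S hS (fun x h => h)); apply; rewrite leq_subr.
elim=> [|k IH] T hT hST hk.
all: case: (excluded_middle_informative (maximal_cone R F T)) => hmax;
  first by exists T.
all: have [T' [hT' hTT' hnot]] : exists T', [/\ T' \in F, vsubset (cone T) (cone T')
          & ~ vsubset (cone T') (cone T)].
all: try (apply: NNPP => hno; apply: hmax; split => // T' hT' hsub;
     apply: NNPP => hn; apply: hno; by exists T').
all: have hlt : (cnt T < cnt T')%N.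
all: try (apply: count_lt;
  [ move=> U /pbP hU; apply/pbP => x hx; exact: hTT' (hU x hx)
  | exists T'; split => //; [by apply/pbP | by apply/pbP] ]).
  have := count_size (fun U => pb (vsubset (cone U) (cone T'))) F.
  rewrite -/(cnt T') => hsz.
  by move: hk; rewrite leqn0 subn_eq0 leqNgt (leq_trans hlt hsz).
apply: (IH T') => //; first by move=> x hx; apply: hTT'; apply: hST.
have := count_size (fun U => pb (vsubset (cone U) (cone T'))) F.
rewrite -/(cnt T') => hsz.
move: hk hlt hsz; clear; lia.
Qed.


Lemma scaling (T T' : seq lat) (lam : nat -> R) : size T' = size T ->
  (forall i, (i < size T)%N -> 0 < lam i /\ lv (nth 0 T i) = lam i *: lv (nth 0 T' i)) ->
  (forall x, cone T x <-> cone T' x) /\ (lin_indep T -> lin_indep T').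
Proof.
move=> hs hl.
have key1 : forall c, lcomb T c = lcomb T' (fun i => c i * lam i).
  move=> c; rewrite !lcomb_nat hs; apply: eq_big_nat => i /andP [_ hi].
  by rewrite (hl i hi).2 scalerA.
split.
  move=> x; rewrite !coneE; split.
    case=> c [c0 ->]; exists (fun i => c i * lam i); split; last exact: key1.
    by move=> i; rewrite hs => hi; rewrite mulr_ge0 ?c0 // ltW // (hl i hi).1.
  case=> c [c0 ->]; exists (fun i => c i / lam i); split.
    by move=> i hi; rewrite divr_ge0 ?c0 ?hs // ltW // (hl i hi).1.
  rewrite key1; apply: eq_lcomb => i; rewrite hs => hi.
  by rewrite mulfVK // gt_eqF // (hl i hi).1.
move=> /lin_indepE hT; apply/lin_indepE => d hd i; rewrite hs => hi.
have e : lcomb T (fun i => d i / lam i) = 0.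
  rewrite key1 -hd; apply: eq_lcomb => k; rewrite hs => hk.
  by rewrite mulfVK // gt_eqF // (hl k hk).1.
have := hT _ e i hi => /eqP; rewrite mulf_eq0 invr_eq0 (gt_eqF (hl i hi).1) orbF.
by move/eqP.
Qed.

Lemma cone_same (l : seq lat) t x : (forall g, g \in l -> g = t) -> cone l x -> ray (lv t) x.
Proof.
elim: l x => [|a l IH] x h.
  by move/cone_nil => ->; exists 0; rewrite scale0r.
case/cone_cons => s [y [s0 hy ->]].
have [r [r0 ->]] := IH y (fun g hg => h g (@mem_behead _ (a :: l) g hg)) hy.
rewrite (h a (mem_head _ _)); exists (s + r); split; first by rewrite addr_ge0.
by rewrite scalerDl.
Qed.

Lemma ray_face T t (C : vec -> Prop) : lin_indep T -> t \in T ->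
  seteq C (cone T) -> is_face (ray (lv t)) C.
Proof.
move=> hT ht hC.
have [al [_ [alnn aliff]]] := alpha_exists (pred1 t) hT.
exists al; split; first by move=> u /hC; apply: alnn.
move=> u; split.
  case=> s [s0 ->].
  have hu : cone T (s *: lv t) by apply: cone_scale => //; apply: cone_mem.
  split; first by apply/hC.
  apply/(aliff _ hu); apply: cone_scale => //; apply: cone_mem.
  by rewrite mem_filter /= eqxx.
case=> /hC hu /(aliff _ hu) hf.
by apply: (cone_same _ hf) => g; rewrite mem_filter => /andP [/eqP].
Qed.


Lemma init (V1 V2 : seq lat) (F1 : fanT) : vsubset (conv V1) (conv V2) ->
  delta_maximal R V1 F1 -> projective R F1 ->
  exists D, [/\ good D, (forall s g, s \in D -> g \in s.1 -> conv V2 (lv g))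
    & (forall s, s \in D -> exists2 S1, S1 \in F1 & vsubset (cone s.1) (cone S1))].
Proof.
move=> hsub [hfan hrays hcomp hsimp] [phi [_ hphi]].
case: hfan => _ hfan2 _; case: hrays => hr1 _.
pose Mx := [seq S <- F1 | pb (maximal_cone R F1 S)].
pose Q (S : seq lat) (d : dat) := [/\ lin_indep d.1, (forall x, cone d.1 x <-> cone S x),
   (forall g, g \in d.1 -> conv V1 (lv g)) &
   (forall u, phi u <= pairing d.2 u /\ (phi u = pairing d.2 u <-> cone S u))].
have hQ : forall S, S \in Mx -> exists d, Q S d.
  move=> S; rewrite mem_filter => /andP [/pbP hmax hS].
  have [m hm] := hphi S hmax.
  have [T [hT hST]] := hsimp S hS.
  have hpts : forall i, (i < size T)%N -> exists p : lat * R,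
      [/\ 0 < p.2, lv (nth 0 T i) = p.2 *: lv p.1 & conv V1 (lv p.1)].
    move=> i hi; set t := nth 0 T i.
    have htT : t \in T by rewrite mem_nth.
    have hface : is_face (ray (lv t)) (cone S) := ray_face hT htT hST.
    have [T'' hT'' hr] := hfan2 S _ hS hface.
    have htnz : lv t != 0 := lin_indep_nz hT htT.
    have [n [hn hcn hrn]] := hr1 T'' (lv t) hT'' htnz (fun x => iff_sym (hr x)).
    have : ray (lv n) (lv t) by apply/hrn/hr; exists 1; rewrite scale1r.
    case=> lam [lam0 elam].
    exists (n, lam); split => //.
    rewrite /= lt_def lam0 andbT; apply: contra htnz => /eqP l0; by rewrite elam l0 scale0r.
  have [l' [hsz hl']] := @exists_list_nth lat (lat * R)%type (0 : lat) ((0 : lat), (0 : R)) T (fun t (p : lat * R) => [/\ 0 < p.2, lv t = p.2 *: lv p.1 & conv V1 (lv p.1)]) hpts.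
  pose T' := map fst l'.
  have hnth : forall i, (i < size T)%N -> nth 0 T' i = (nth (0, 0) l' i).1.
    by move=> i hi; rewrite (nth_map (0, 0)) // hsz.
  have hs' : size T' = size T by rewrite size_map hsz.
  pose lam := fun i => (nth ((0 : lat), (0 : R)) l' i).2.
  have hl2 : forall i, (i < size T)%N -> 0 < lam i /\ lv (nth 0 T i) = lam i *: lv (nth 0 T' i).
    by move=> i hi; case: (hl' i hi) => h1 h2 _; split => //; rewrite hnth.
  have [hcone hli] := scaling hs' hl2.
  exists (T', m); split => /=.
  - exact: hli.
  - by move=> x; rewrite -hcone hST.
  - move=> g /(nthP 0) [i]; rewrite size_map hsz => hi <-.
    by rewrite hnth //; case: (hl' i hi).
  - exact: hm.
have [D [hD1 hD2]] := exists_list hQ.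
exists D; split.
- split.
  + by move=> s /hD1 [S _ []].
  + move=> s t g /hD1 [S _ [_ hs1 _ hs2]] /hD1 [S' _ [_ _ _ ht2]] hg.
    have hgS : cone S (lv g) by apply/hs1; apply: cone_mem.
    by rewrite -(proj2 (proj2 (hs2 (lv g))) hgS); apply: (ht2 _).1.
  + move=> s t g /hD1 [S _ [_ hs1 _ hs2]] /hD1 [S' _ [_ ht1 _ ht2]] hg e.
    have hgS : cone S (lv g) by apply/hs1; apply: cone_mem.
    apply/ht1; apply/(ht2 _).2; rewrite e.
    exact: (proj2 (proj2 (hs2 (lv g))) hgS).
  + move=> x; have [S hS hx] := hcomp x.
    have [S' [hmax hsub']] := maximal_above hS.
    have hS' : S' \in Mx by rewrite mem_filter (introT (pbP _) hmax) hmax.1.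
    have [d hd [_ hd1 _ _]] := hD2 S' hS'.
    by exists d => //; apply/hd1; apply: hsub'.
- move=> s g /hD1 [S _ [_ _ hs3 _]] hg; exact: hsub (hs3 g hg).
- move=> s /hD1 [S hS [_ hs1 _ _]]; exists S.
    by move: hS; rewrite mem_filter => /andP [].
  by move=> x /hs1.
Qed.


Fixpoint tuples (b : seq int) (k : nat) : seq (seq int) :=
  if k is k'.+1 then [seq z :: l | z <- b, l <- tuples b k'] else [:: [::]].

Lemma tuplesP b l : all (fun z => z \in b) l -> l \in tuples b (size l).
Proof.
elim: l => [|z l IH] //= /andP [hz hl].
exact: (allpairs_f (fun z0 l0 => z0 :: l0)) hz (IH hl).
Qed.

Lemma sum_mem (V : seq lat) (F : lat -> nat) w : w \in V -> (F w <= \sum_(x <- V) F x)%N.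
Proof.
elim: V => [|a V IH] //; rewrite in_cons big_cons => /orP [/eqP -> | hw].
  exact: leq_addr.
exact: leq_trans (IH hw) (leq_addl _ _).
Qed.

Lemma enum_lattice (V2 : seq lat) : exists L : seq lat,
  forall n, n \in L <-> (n != 0 /\ conv V2 (lv n)).
Proof.
pose M := (\sum_(w <- V2) \sum_(k < 4) `|w 0%R k|)%N.
have hw : forall w k, w \in V2 -> (- (M%:Z) <= w 0 k)%R /\ (w 0 k <= M%:Z)%R.
  move=> w k hwV.
  have h1 : (`|w 0%R k| <= \sum_(k < 4) `|w 0%R k|)%N.
    by rewrite (bigD1 k) //= leq_addr.
  have h2 := leq_trans h1 (sum_mem (fun w : lat => \sum_(k < 4) `|w 0%R k|)%N hwV).
  rewrite -/M in h2; split; lia.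
have hb : forall n : lat, conv V2 (lv n) -> forall k,
    (- (M%:Z) <= n 0 k)%R /\ (n 0 k <= M%:Z)%R.
  move=> n [c [c0 [c1 hx]]] k.
  have e : ((n 0 k)%:~R : R) = \sum_i c i * ((nth 0 V2 i) 0 k)%:~R.
    have := congr1 (fun x : vec => x 0 k) hx; rewrite /= mxE summxE => ->.
    by apply: eq_bigr => i _; rewrite !mxE.
  have hi : forall i : 'I_(size V2), (- (M%:Z) <= (nth 0 V2 i) 0 k)%R /\
                                     ((nth 0 V2 i) 0 k <= M%:Z)%R.
    by move=> i; apply: hw; rewrite mem_nth.
  have hs1 : \sum_i c i * ((- (M%:Z))%:~R : R) = (- (M%:Z))%:~R.
    by rewrite -big_distrl /= c1 mul1r.
  have hs2 : \sum_i c i * ((M%:Z)%:~R : R) = (M%:Z)%:~R.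
    by rewrite -big_distrl /= c1 mul1r.
  split; rewrite -(ler_int R) e.
    rewrite -hs1; apply: ler_sum => i _; apply: ler_wpM2l => //.
    by rewrite ler_int (hi i).1.
  rewrite -hs2; apply: ler_sum => i _; apply: ler_wpM2l => //.
  by rewrite ler_int (hi i).2.
pose box1 := [seq (k%:Z - M%:Z)%R | k <- iota 0 (2 * M).+1].
have mem1 : forall z : int, (- (M%:Z) <= z)%R -> (z <= M%:Z)%R -> z \in box1.
  move=> z h1 h2; apply/mapP; exists (absz (z + M%:Z)%R).
    rewrite mem_iota add0n; lia.
  lia.
pose box := [seq (\row_(i < 4) nth 0 l i : lat) | l <- tuples box1 4].
exists [seq n <- box | pb (n != 0 /\ conv V2 (lv n))] => n.
rewrite mem_filter; split; first by case/andP => /pbP.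
move=> h; rewrite (introT (pbP _) h) /=.
have [hn hc] := h.
have hl : [:: n 0 0; n 0 1; n 0 2; n 0 3] \in tuples box1 4.
  apply: (tuplesP (l := [:: n 0 0; n 0 1; n 0 2; n 0 3])).
  by rewrite /= !mem1 ?(hb n hc _).1 ?(hb n hc _).2.
apply/mapP; exists [:: n 0 0; n 0 1; n 0 2; n 0 3] => //.
apply/rowP => i; rewrite mxE.
by case: i => [[|[|[|[|i]]]] hi] //=; congr (n 0 _); apply/val_inj.
Qed.

Lemma iterate (V2 : seq lat) (F1 : fanT) (L : seq lat) D : good D ->
  (forall s g, s \in D -> g \in s.1 -> conv V2 (lv g)) ->
  (forall s, s \in D -> exists2 S1, S1 \in F1 & vsubset (cone s.1) (cone S1)) ->
  (forall n, n \in L -> n != 0 /\ conv V2 (lv n)) ->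
  exists D', [/\ good D', (forall s g, s \in D' -> g \in s.1 -> conv V2 (lv g)),
    (forall s, s \in D' -> exists2 S1, S1 \in F1 & vsubset (cone s.1) (cone S1)) &
    (forall n, n \in L -> exists2 s, s \in D' &
        exists2 g, g \in s.1 & seteq (ray (lv g)) (ray (lv n)))].
Proof.
move=> hD hP1 hP2; elim: L => [|v L IH] hL.
  by exists D; split.
have [D1 [hD1 h11 h12 hr1]] := IH (fun n hn => hL n (@mem_behead _ (v :: L) n hn)).
have [hv0 hvc] := hL v (mem_head _ _).
have hv : lv v != 0 by apply: contra hv0 => /eqP /lv_eq0 ->.
have [D' [hD' O1 [x0 hx0 hvx0] O3]] := stellar hD1 hv.
exists D'; split => //.
- move=> x g hx hg; have [s hs [_ hgs]] := O1 x hx.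
  by case: (hgs g hg) => [hg' | ->]; [exact: h11 hs hg' | exact: hvc].
- move=> x hx; have [s hs [hsub _]] := O1 x hx.
  have [S1 hS1 hsub'] := h12 s hs.
  by exists S1 => // y hy; apply: hsub'; apply: hsub.
- move=> n; rewrite in_cons => /orP [/eqP -> | hn].
    by exists x0 => //; exists v.
  have [s hs [g hg hrg]] := hr1 n hn.
  have [x hx [g' hg' hr']] := O3 s g hs hg.
  exists x => //; exists g' => // y; rewrite hr'; exact: hrg.
Qed.

End Proof.

Theorem lemma6p1 (R : realFieldType) (V1 V2 : seq (lat))
  (hr1 : reflexive_polytope R V1) (hr2 : reflexive_polytope R V2)
  (hsub : vsubset R (conv R V1) (conv R V2))
  (F1 : fanT) (hF1 : delta_maximal R V1 F1) (hp1 : projective R F1) :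
  exists F2 : fanT, [/\ delta_maximal R V2 F2, projective R F2 & refines R F2 F1].
Proof.
have [D0 [g0 p10 p20]] := init hsub hF1 hp1.
have [L hL] := enum_lattice R V2.
have [D [gD p1 p2 hr]] := iterate (L := L) g0 p10 p20 (fun n hn => (hL n).1 hn).
apply: (final gD p1 p2) => n hn hc; apply: hr; by apply/hL; split.
Qed.
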